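(* Let $W$ be an sc-Banach space, $E=\mathbb R^n\oplus W$, $C=[0,\infty)^n\oplus W$, and let $N\subset E_\infty$ be a finite-dimensional linear subspace such that $C\cap N$ is a closed convex cone. If $a\in C\cap N$ is nonzero and generates an extreme ray of $C\cap N$, then $\dim(N)-1\le\sharp\sigma_a$. If, in addition, $N$ is in good position to $C$, then $\dim(N)-1=\sharp\sigma_a$.
   Context: An sc-Banach space is a Banach space $W$ with nested Banach spaces $W=W_0\supset W_1\supset\cdots$, compact inclusions $W_n\to W_m$ ($m<n$), $W_\infty=\bigcap W_m$ dense in each $W_m$; $E$ has levels $E_m=\mathbb R^n\oplus W_m$, $E_\infty=\mathbb R^n\oplus W_\infty$, and $\|\cdot\|$ is the level-$0$ norm. For $a=(a_1,\dots,a_n,a_\infty)\in C$, $\sigma_a=\{i\in\{1,\dots,n\}: a_i=0\}$. A closed convex cone is a closed convex set $P$ with $P\cap(-P)=\{0\}$ and $\mathbb R^+P=P$; an extreme ray is $\mathbb R^+x$, $x\in P\setminus\{0\}$, such that $y\in P$, $x-y\in P$ imply $y\in\mathbb R^+x$. An sc-complement of $N$ is a closed subspace $N^\perp$ with $E_m=(N\cap E_m)\oplus(N^\perp\cap E_m)$ topologically for all $m$, both pieces sc-subspaces. $N$ is in good position to $C$ if $N\cap C$ has nonempty interior in $N$ and there are an sc-complement $N^\perp$ and $c>0$ such that for $(n,m)\in N\oplus N^\perp$ with $\|m\|\le c\|n\|$: $n+m\in C$ iff $n\in C$. *)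

(* Defs.v *)
From mathcomp Require Import all_boot all_algebra all_classical all_reals all_analysis.
Import GRing.Theory Num.Theory numFieldNormedType.Exports.
Set Implicit Arguments. Unset Strict Implicit. Unset Printing Implicit Defensive.
Local Open Scope ring_scope.
Local Open Scope classical_set_scope.

Record sc_structure (R : realType) (W : normedModType R) : Type := SC {
  sc_lvl : nat -> set W;
  sc_nrm : nat -> W -> R;
  sc_lvl0 : sc_lvl 0 = setT;
  sc_nrm0 : forall w, sc_nrm 0 w = `|w|;
  sc_nested : forall m, sc_lvl m.+1 `<=` sc_lvl m;
  sc_lvl_sub0 : forall m, sc_lvl m 0;
  sc_lvl_subD : forall m (a : R) x y,
      sc_lvl m x -> sc_lvl m y -> sc_lvl m (a *: x + y);
  sc_nrm_ge0 : forall m x, sc_lvl m x -> 0 <= sc_nrm m x;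
  sc_nrm_eq0 : forall m x, sc_lvl m x -> sc_nrm m x = 0 -> x = 0;
  sc_nrmZ : forall m (a : R) x, sc_lvl m x -> sc_nrm m (a *: x) = `|a| * sc_nrm m x;
  sc_nrm_triangle : forall m x y, sc_lvl m x -> sc_lvl m y ->
      sc_nrm m (x + y) <= sc_nrm m x + sc_nrm m y;
  sc_complete : forall m (u : nat -> W), (forall k, sc_lvl m (u k)) ->
      (forall eps, 0 < eps -> exists K, forall i j, (K <= i)%N -> (K <= j)%N ->
          sc_nrm m (u i - u j) < eps) ->
      exists l, sc_lvl m l /\
        (forall eps, 0 < eps -> exists K, forall i, (K <= i)%N -> sc_nrm m (u i - l) < eps);
  (* compactness of the inclusion W_k -> W_m for m < k: bounded sequences in
     W_k have subsequences converging in W_m *)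
  sc_compact : forall m k, (m < k)%N -> forall u : nat -> W,
      (forall j, sc_lvl k (u j)) -> (exists M, forall j, sc_nrm k (u j) <= M) ->
      exists (phi : nat -> nat) (l : W),
        (forall j, (phi j < phi j.+1)%N) /\ sc_lvl m l /\
        (forall eps, 0 < eps -> exists K, forall j, (K <= j)%N ->
            sc_nrm m (u (phi j) - l) < eps);
  sc_dense : forall m x eps, sc_lvl m x -> 0 < eps ->
      exists y, (forall k, sc_lvl k y) /\ sc_nrm m (x - y) < eps
}.

Section EDefs.
Context (R : realType) (W : completeNormedModType R) (n : nat).

(* E = R^n ⊕ W, modeled as 'rV[R]_n * W; its (level-0) norm is the
   product (max) norm, equivalent to any norm on R^n ⊕ W. *)
Definition Etype := ('rV[R]_n * W)%type.

Definition Elvl (sc : sc_structure W) (m : nat) : set Etype :=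
  [set e | sc_lvl sc m e.2].
Definition Enrm (sc : sc_structure W) (m : nat) (e : Etype) : R :=
  Num.max `|e.1| (sc_nrm sc m e.2).
Definition Einf (sc : sc_structure W) : set Etype :=
  [set e | forall m, Elvl sc m e].

Definition Cquad : set Etype := [set e : Etype | forall i : 'I_n, 0 <= e.1 ord0 i].

Definition sigma_set (a : Etype) : {set 'I_n} := [set i : 'I_n | a.1 ord0 i == 0].

End EDefs.
Arguments Etype {R} W n.
Arguments Cquad {R} W n.

Definition is_subspace (R : realType) (V : lmodType R) (S : set V) : Prop :=
  S 0 /\ forall (a : R) x y, S x -> S y -> S (a *: x + y).

Definition is_dim (R : realType) (V : lmodType R) (S : set V) (d : nat) : Prop :=
  exists s : seq V, size s = d /\
    (forall c : nat -> R, \sum_(i < size s) c i *: s`_i = 0 ->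
        forall i, (i < size s)%N -> c i = 0) /\
    (forall x, S x <-> exists c : nat -> R, x = \sum_(i < size s) c i *: s`_i).

Definition closed_convex_cone (R : realType) (V : normedModType R) (P : set V) : Prop :=
  closed P /\
  (forall x y (t : R), P x -> P y -> 0 <= t <= 1 -> P (t *: x + (1 - t) *: y)) /\
  P 0 /\ (forall x, P x -> P (- x) -> x = 0) /\
  (forall (t : R) x, 0 <= t -> P x -> P (t *: x)).

Definition extreme_ray (R : realType) (V : normedModType R) (P : set V) (a : V) : Prop :=
  P a /\ a <> 0 /\
  forall y, P y -> P (a - y) -> exists t : R, 0 <= t /\ y = t *: a.

Section Position.
Context (R : realType) (W : completeNormedModType R) (n : nat) (sc : sc_structure W).

Definition sc_subspace (F : set (Etype W n)) : Prop :=
  is_subspace F /\ closed F /\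
  forall m x eps, F x -> Elvl sc m x -> 0 < eps ->
    exists y, F y /\ Einf sc y /\ Enrm sc m (x - y) < eps.

(* Np is an sc-complement of N: closed subspace with
   E_m = (N ∩ E_m) ⊕ (Np ∩ E_m) topologically for all m (direct sum with
   bounded projections), both pieces sc-subspaces. *)
Definition sc_complement (N Np : set (Etype W n)) : Prop :=
  is_subspace Np /\ closed Np /\
  (forall e, N e -> Np e -> e = 0) /\
  (forall m, exists K : R, 0 <= K /\
     forall e, Elvl sc m e -> exists u v, N u /\ Np v /\ Elvl sc m u /\ Elvl sc m v /\
        e = u + v /\ Enrm sc m u <= K * Enrm sc m e) /\
  sc_subspace N /\ sc_subspace Np.

Definition good_position (N : set (Etype W n)) : Prop :=
  (exists x (r : R), N x /\ 0 < r /\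
     forall y, N y -> `|y - x| < r -> (N `&` Cquad W n) y) /\
  (exists Np (c : R), sc_complement N Np /\ 0 < c /\
     forall u v, N u -> Np v -> `|v| <= c * `|u| ->
        (Cquad W n (u + v) <-> Cquad W n u)).

End Position.

(* Main.v *)
Require Import Defs.
From mathcomp Require Import all_boot all_algebra all_classical all_reals all_analysis.
From mathcomp Require Import zify.
Import order.Order.TTheory GRing.Theory Num.Theory numFieldNormedType.Exports.
Local Open Scope ring_scope.
Local Open Scope classical_set_scope.

Set Implicit Arguments. Unset Strict Implicit.
Section Aux.
Context (R : realType) (W : completeNormedModType R) (n : nat).
Implicit Types (s : seq (Etype W n)).

Definition Lc s (r : 'rV[R]_(size s)) : Etype W n := \sum_(i < size s) r 0 i *: s`_i.

Lemma Lc_fst s (r : 'rV[R]_(size s)) j : (Lc r).1 0 j = \sum_(i < size s) r 0 i * (s`_i).1 0 j.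
Proof.
rewrite /Lc (big_morph fst (id1:=0) (op1:=+%R)) //.
rewrite summxE; apply: eq_bigr => i _ /=; by rewrite mxE.
Qed.

Lemma Lc_lin s (t : R) (r1 r2 : 'rV[R]_(size s)) : Lc (t *: r1 + r2) = t *: Lc r1 + Lc r2.
Proof.
rewrite /Lc scaler_sumr -big_split; apply: eq_bigr => i _ /=.
by rewrite !mxE scalerDl scalerA.
Qed.

Definition cof s (r : 'rV[R]_(size s)) (i : nat) : R :=
  oapp (fun j : 'I_(size s) => r 0 j) 0 (insub i).

Lemma cof_sum s (r : 'rV[R]_(size s)) : \sum_(i < size s) cof r i *: s`_i = Lc r.
Proof. apply: eq_bigr => i _; by rewrite /cof valK. Qed.

Lemma Lc_inj s : (forall c : nat -> R, \sum_(i < size s) c i *: s`_i = 0 ->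
        forall i, (i < size s)%N -> c i = 0) ->
  forall r1 r2 : 'rV[R]_(size s), Lc r1 = Lc r2 -> r1 = r2.
Proof.
move=> Hind r1 r2 E.
have E0 : Lc (r1 - r2) = 0.
  have -> : r1 - r2 = (-1) *: r2 + r1 by rewrite scaleN1r addrC.
  by rewrite Lc_lin E scaleN1r addNr.
apply/eqP; rewrite -subr_eq0; apply/eqP/rowP => j.
have := Hind (cof (r1 - r2)); rewrite cof_sum => /(_ E0 j (ltn_ord j)).
by rewrite /cof valK /= !mxE.
Qed.

Lemma Lc0 s : Lc (0 : 'rV[R]_(size s)) = 0.
Proof. by rewrite /Lc big1 // => i _; rewrite mxE scale0r. Qed.

Lemma fin_pos (I : finType) (P : I -> R -> Prop) :
  (forall i e e', 0 < e' -> e' <= e -> P i e -> P i e') ->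
  (forall i, exists e, 0 < e /\ P i e) -> exists e, 0 < e /\ forall i, P i e.
Proof.
move=> Hm Hx.
suff [e [e0 He]] : exists e, 0 < e /\ forall i, i \in enum I -> P i e.
  by exists e; split=> // i; apply: He; rewrite mem_enum.
elim: (enum I) => [|j l [e [e0 He]]]; first by exists 1; split.
have [f [f0 Hf]] := Hx j.
exists (Num.min e f); split; first by rewrite lt_min e0 f0.
move=> i; rewrite inE => /orP [/eqP -> | Hi].
  by apply: (Hm _ f) Hf; rewrite ?lt_min ?e0 ?f0 // ge_min lexx orbT.
by apply: (Hm _ e) (He _ Hi); rewrite ?lt_min ?e0 ?f0 // ge_min lexx.
Qed.

End Aux.


Unset Implicit Arguments. Set Strict Implicit.
Theorem lemma6p5 (R : realType) (W : completeNormedModType R)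
    (sc : sc_structure W) (n : nat) (N : set (Etype W n)) (d : nat) :
  is_subspace N -> N `<=` Einf sc -> is_dim N d ->
  closed_convex_cone (Cquad W n `&` N) ->
  forall a : Etype W n, extreme_ray (Cquad W n `&` N) a ->
    (d.-1 <= #|sigma_set a|)%N /\
    (good_position sc N -> d.-1 = #|sigma_set a|).
Proof.
move=> HN Hinf [s [Hsz [Hind Hspan]]] _ a [[Ca Na] [a0 Hext]].
subst d.
have LN : forall x, N x -> exists r : 'rV[R]_(size s), x = Lc r.
  move=> x /Hspan [c Ec]; exists (\row_(i < size s) c i); rewrite Ec.
  by apply: eq_bigr => i _; rewrite mxE.
have NL : forall r : 'rV[R]_(size s), N (Lc r).
  by move=> r; apply/Hspan; exists (cof r); rewrite cof_sum.
have NZ : forall (t : R) x, N x -> N (t *: x).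
  by move=> t x Nx; rewrite -[t *: x]addr0; apply: HN.2 => //; exact: HN.1.
have ND : forall x y, N x -> N y -> N (x + y).
  by move=> x y Nx Ny; rewrite -[x]scale1r; apply: HN.2.
have [ca Ea] := LN a Na.
set k := #|sigma_set a|.
pose K : 'M[R]_(size s, k) := \matrix_(i, j) (s`_i).1 0 (enum_val j).
have KE : forall (r : 'rV[R]_(size s)) j, (r *m K) 0 j = (Lc r).1 0 (enum_val j).
  move=> r j; rewrite Lc_fst mxE; apply: eq_bigr => i _; by rewrite mxE.
have kerK : forall r, r *m K = 0 -> forall i, i \in sigma_set a -> (Lc r).1 0 i = 0.
  by move=> r Hr i Hi; rewrite -(enum_rankK_in Hi Hi) -KE Hr mxE.
have caK : ca *m K = 0.
  apply/rowP => j; rewrite KE -Ea mxE.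
  by move: (enum_valP j); rewrite inE => /eqP.
have ca0 : ca != 0.
  by apply/eqP => c0; apply: a0; rewrite Ea c0 Lc0.
have rk1 : (1 <= \rank (kermx K))%N.
  have : (\rank ca <= \rank (kermx K))%N by apply: mxrankS; rewrite sub_kermx caK.
  by rewrite rank_rV ca0.
have Hker := mxrank_ker K.
have HrK := rank_leq_col K.
have P1 : ((size s).-1 <= k)%N.
  rewrite leqNgt; apply/negP => Hlt.
  have nsub : ~~ (kermx K <= ca)%MS.
    by apply/negP => /mxrankS; rewrite rank_rV ca0; lia.
  have [i Hi] : exists i, ~~ (row i (kermx K) <= ca)%MS.
    apply/existsP; rewrite -negb_forall; apply: contra nsub => /forallP H.
    by apply/row_subP.
  set c := row i (kermx K).
  have cK : c *m K = 0 by apply/eqP; rewrite -sub_kermx row_sub.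
  set x := Lc c.
  have x0 : forall j, j \in sigma_set a -> x.1 0 j = 0 := kerK c cK.
  have [e [e0 He]] : exists e, 0 < e /\ forall j, a.1 0 j != 0 -> `|e * x.1 0 j| <= a.1 0 j.
    apply: (fin_pos (P := fun j e => a.1 0 j != 0 -> `|e * x.1 0 j| <= a.1 0 j)).
      move=> j f f' f'0 f'f Hf /Hf; apply: le_trans.
      by rewrite !normrM ler_wpM2r // !ger0_norm // ?ltW // (lt_le_trans f'0).
    move=> j; case: (eqVneq (a.1 0 j) 0) => aj.
      by exists 1; split => //; rewrite aj eqxx.
    have aj0 : 0 < a.1 0 j by rewrite lt_def aj; exact: Ca.
    exists (a.1 0 j / (`|x.1 0 j| + 1)); split.
      by rewrite divr_gt0 // ltr_wpDl.
    move=> _; rewrite normrM (@ger0_norm _ (a.1 0 j / _)); last first.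
      by rewrite divr_ge0 // ltW // ltr_wpDl.
    rewrite mulrAC ler_pdivrMr ?ltr_wpDl // ler_pM2l //.
    by rewrite lerDl ler01.
  have Cp : forall t, `|t| <= e -> (Cquad W n `&` N) (2^-1 *: (a + t *: x)).
    move=> t te; split; last by apply: (NZ); apply: (ND) => //; apply: (NZ); exact: NL.
    move=> j /=; rewrite !mxE; apply: mulr_ge0 => //.
    case: (eqVneq (a.1 0 j) 0) => aj.
      by rewrite aj x0 ?inE ?aj // mulr0 addr0.
    have := He j aj; rewrite -(opprK (t * _)) subr_ge0 => H.
    apply: le_trans H; apply: le_trans (ler_norm _) _.
    by rewrite normrN !normrM (ger0_norm (ltW e0)); apply: ler_wpM2r.
  have Ce := Cp e (ltac:(by rewrite ger0_norm ?lexx ?ltW)).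
  have Cm := Cp (-e) (ltac:(by rewrite normrN ger0_norm ?lexx ?ltW)).
  have Ey : a - 2^-1 *: (a + e *: x) = 2^-1 *: (a + (-e) *: x).
    apply: (scalerI (a := 2)); first by rewrite pnatr_eq0.
    rewrite scalerBr !scalerA mulfV ?pnatr_eq0 // !scale1r scaleNr.
    by rewrite scalerDl scale1r opprD addrA addrK.
  have [tt [_ Ht]] := Hext _ Ce (ltac:(by rewrite Ey)).
  have H2 : a + e *: x = (2 * tt) *: a.
    by rewrite -scalerA -Ht scalerA mulfV ?scale1r // pnatr_eq0.
  have Ex : x = (e^-1 * (2 * tt - 1)) *: a.
    rewrite -scalerA scalerBl scale1r -H2 addrAC subrr add0r scalerA.
    by rewrite mulVf ?gt_eqF // scale1r.
  have Ec : c = (e^-1 * (2 * tt - 1)) *: ca + 0.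
    apply: (Lc_inj Hind); rewrite Lc_lin Lc0 addr0 -Ea -Ex //.
  by move: Hi; rewrite -/c Ec addr0 scalemx_sub ?submx_refl.
split => //.
move=> [_ [Np [cc [[HNp [_ [_ [Hdec _]]]] [cc0 Hgp]]]]].
have [K0 [_ Hd]] := Hdec 0%N.
have Kfull : (k <= \rank K)%N.
  suff HK : ((1%:M : 'M[R]_k) <= K)%MS by have := mxrankS HK; rewrite mxrank1.
  apply/row_subP => j; rewrite row1.
  suff [r Hr] : exists r : 'rV[R]_(size s), delta_mx 0 j = r *m K by rewrite Hr submxMl.
  pose z : Etype W n := (delta_mx 0 (enum_val j), 0).
  have [u [v [Nu [Npv [_ [_ [Ez _]]]]]]] := Hd z (ltac:(by rewrite /Elvl /= sc_lvl0)).
  have [r Er] := LN u Nu; exists r.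
  have v0 : forall i, i \in sigma_set a -> v.1 0 i = 0.
    move=> i Hi; have ai : a.1 0 i = 0 by move: Hi; rewrite inE => /eqP.
    have vp : 0 < `|v| + 1 by rewrite ltr_wpDl.
    have ap : 0 < `|a| by rewrite normr_gt0; apply/eqP.
    pose t := cc * `|a| / (`|v| + 1).
    have tp : 0 < t := divr_gt0 (mulr_gt0 cc0 ap) vp.
    have H1 : forall t', `|t'| = t -> 0 <= t' * v.1 0 i.
      move=> t' Ht'.
      have Hn : Np (t' *: v).
        by rewrite -[t' *: v]addr0; apply: (HNp.2) => //; exact: HNp.1.
      have Hb : `|t' *: v| <= cc * `|a|.
        rewrite normrZ Ht' /t mulrAC ler_pdivrMr // ler_pM2l ?(mulr_gt0 cc0 ap) //.
        by rewrite lerDl ler01.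
      have := (Hgp a (t' *: v) Na Hn Hb).2 Ca.
      by move/(_ i) => /=; rewrite !mxE ai add0r.
    have h1 := H1 t (gtr0_norm tp).
    have h2 := H1 (- t) (ltac:(by rewrite normrN gtr0_norm)).
    have : t * v.1 0 i = 0.
      by apply/le_anti; rewrite h1 andbT -oppr_ge0 -mulNr.
    by move/eqP; rewrite mulf_eq0 gt_eqF //= => /eqP.
  apply/rowP => j'; rewrite KE -Er.
  have : z.1 0 (enum_val j') = u.1 0 (enum_val j') + v.1 0 (enum_val j') by rewrite Ez /= mxE.
  rewrite v0 ?enum_valP // addr0 => <-.
  by rewrite !mxE /= (inj_eq enum_val_inj).
lia.
Qed.
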